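(* Let $P<P'$ be priority forests in $\Pi(n)$. Then the Möbius function satisfies $$\mu(P,P')=\begin{cases}(-1)^{\rho(P')-\rho(P)}&\text{if }P'\text{ is a }P\text{-Boolean forest},\\ 0&\text{otherwise.}\end{cases}$$
   Context: $[n]_0=\{0,\dots,n\}$. A priority forest on $[n]_0$ is a rooted forest with vertex set $[n]_0$ whose component trees $T_0,T_1,\dots$ are increasing (each non-root vertex has a larger label than its parent) and satisfy: for $j<k$ every label of $T_j$ is smaller than every label of $T_k$. The priority lattice $\Pi(n)$ is the set of priority forests on $[n]_0$ ordered by inclusion of edge sets, together with an extra top element $\hat1$. The rank of a priority forest is $\rho(P)=|E(P)|$. For priority forests $P<P'$, an edge $e\in E(P')\setminus E(P)$ is $P$-removable if deleting $e$ from $P'$ yields a priority forest (the forest's components are re-indexed by their root labels). $P'$ is a $P$-Boolean forest if every edge of $E(P')\setminus E(P)$ is $P$-removable. *)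

(* Defs.v *)
From mathcomp Require Import all_boot all_order all_algebra.
Set Implicit Arguments. Unset Strict Implicit. Unset Printing Implicit Defensive.
Import GRing.Theory.

(* Vertices [n]_0 = {0,...,n} are 'I_n.+1.  An edge of a rooted forest is
   recorded as the pair (parent, child). *)
Definition vtx (n : nat) := 'I_n.+1.
Definition edgeset (n : nat) := {set (vtx n * vtx n)}.

(* Rooted forest with increasing trees: every child has a larger label than
   its parent, and every vertex has at most one parent (roots = parentless
   vertices; acyclicity follows from the increasing labels). *)
Definition increasing_forest n (E : edgeset n) : bool :=
  [forall e in E, (e.1 < e.2)%N] &&
  [forall p : vtx n, forall p' : vtx n, forall c : vtx n,
     ((p, c) \in E) ==> ((p', c) \in E) ==> (p == p')].

Definition same_comp n (E : edgeset n) : rel (vtx n) :=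
  connect (fun u v => ((u, v) \in E) || ((v, u) \in E)).

(* Priority condition: the components can be listed T_0, T_1, ... so that
   every label of T_j is smaller than every label of T_k for j < k; i.e. for
   any two distinct components, if some label of the first is smaller than
   some label of the second, then all labels of the first are smaller than
   all labels of the second. *)
Definition priority_cond n (E : edgeset n) : bool :=
  [forall u : vtx n, forall v : vtx n, forall u' : vtx n, forall v' : vtx n,
     same_comp E u u' ==> same_comp E v v' ==> ~~ same_comp E u v ==>
     (u < v)%N ==> (u' < v')%N].

Definition is_priority_forest n (E : edgeset n) : bool :=
  increasing_forest E && priority_cond E.

Definition PF (n : nat) := {E : edgeset n | is_priority_forest E}.

(* The priority lattice Pi(n): priority forests plus an extra top element
   (None), ordered by inclusion of edge sets. *)
Definition Pi (n : nat) := option (PF n).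

Definition Pi_le n (x y : Pi n) : bool :=
  match x, y with
  | _, None => true
  | None, Some _ => false
  | Some a, Some b => val a \subset val b
  end.

(* Implemented by recursion with fuel; fuel #|T|.+1 exceeds the length of any
   chain, so this is the Möbius function whenever le is a partial order. *)
Local Open Scope ring_scope.
Fixpoint mobius_rec (T : finType) (le : rel T) (k : nat) (x y : T) : int :=
  match k with
  | 0 => 0
  | k'.+1 =>
      if x == y then 1
      else if le x y then
        - (\sum_(z : T | le x z && le z y && (z != y)) mobius_rec le k' x z)
      else 0
  end.

Definition mobius (T : finType) (le : rel T) (x y : T) : int :=
  mobius_rec le #|T|.+1 x y.

Local Close Scope ring_scope.
Definition rho n (P : PF n) : nat := #|val P|.

Definition removable n (P P' : PF n) (e : vtx n * vtx n) : bool :=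
  is_priority_forest (val P' :\ e).

Definition boolean_forest n (P P' : PF n) : bool :=
  [forall e in val P' :\: val P, removable P P' e].

(* Main.v *)
Require Import Defs.
From mathcomp Require Import all_boot all_order all_algebra.
From mathcomp Require Import zify.
Import GRing.Theory.
Set Implicit Arguments. Unset Strict Implicit. Unset Printing Implicit Defensive.

Definition haspar n (E : edgeset n) (w : vtx n) : bool :=
  [exists q : vtx n, (q, w) \in E].
Definition local n (E : edgeset n) : bool :=
  [forall e in E, forall w : vtx n, ((e.1 < w) && (w <= e.2))%N ==> haspar E w].
Definition adj n (E : edgeset n) (e : vtx n * vtx n) : bool :=
  [forall w : vtx n, ((e.1 < w) && (w < e.2))%N ==> haspar E w].

Lemma incP n (E : edgeset n) :
  reflect ((forall p c, (p,c) \in E -> p < c) /\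
           (forall p p' c, (p,c) \in E -> (p',c) \in E -> p = p'))
          (increasing_forest E).
Proof.
apply: (iffP andP) => [[/forallP H1 /forallP H2]|[H1 H2]]; split.
- by move=> p c pc; exact: (implyP (H1 (p,c)) pc).
- move=> p p' c h h'; have /forallP /(_ p') /forallP /(_ c) := H2 p.
  by rewrite h h' => /eqP.
- by apply/forallP => -[p c]; apply/implyP => /H1.
- apply/forallP=> p; apply/forallP => p'; apply/forallP => c.
  by apply/implyP => h; apply/implyP=> h'; apply/eqP; exact: H2 h h'.
Qed.

Lemma localP n (E : edgeset n) :
  reflect (forall (p c w : vtx n), (p,c) \in E -> p < w -> w <= c -> haspar E w)
          (local E).
Proof.
apply: (iffP forallP) => [H p c w pc pw wc|H].
  by have /implyP/(_ pc)/forallP/(_ w)/implyP := H (p,c); apply; rewrite pw wc.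
move=> [p c]; apply/implyP => pc; apply/forallP => w; apply/implyP => /andP[].
exact: H.
Qed.

Lemma adjP n (E : edgeset n) (e : vtx n * vtx n) :
  reflect (forall w : vtx n, e.1 < w -> w < e.2 -> haspar E w) (adj E e).
Proof.
apply: (iffP forallP) => [H w h1 h2|H w].
  by apply: (implyP (H w)); rewrite h1 h2.
by apply/implyP => /andP[]; apply: H.
Qed.

Lemma inc_sub n (E F : edgeset n) : F \subset E -> increasing_forest E -> increasing_forest F.
Proof.
move=> /subsetP sFE /incP[H1 H2]; apply/incP; split.
  by move=> p c /sFE; apply: H1.
by move=> p p' c /sFE h /sFE h'; apply: H2 h h'.
Qed.

Definition srel n (E : edgeset n) : rel (vtx n) := fun u v => ((u, v) \in E) || ((v, u) \in E).

Lemma same_compE n (E : edgeset n) : same_comp E = connect (srel E).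
Proof. by []. Qed.

Lemma srel_sym n (E : edgeset n) : connect_sym (srel E).
Proof. by apply: sym_connect_sym => u v; rewrite /srel orbC. Qed.

Lemma path_mono n (E : edgeset n) (r : vtx n) p :
  increasing_forest E -> path (fun u v => (u, v) \in E) r p -> r <= last r p.
Proof.
move=> /incP[H1 _]; elim: p r => //= y p IH r /andP[ry py].
by apply: leq_trans (IH _ py); apply: ltnW; apply: H1.
Qed.

Lemma last_step n (E : edgeset n) (r z : vtx n) :
  connect (fun u v => (u, v) \in E) r z -> z != r ->
  exists w, connect (fun u v => (u, v) \in E) r w /\ (w, z) \in E.
Proof.
move=> /connectP[p pp ->]; case/lastP: p pp => [|p y] //=; first by rewrite eqxx.
rewrite rcons_path last_rcons => /andP[pp ly] _; exists (last r p); split => //.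
by apply/connectP; exists p.
Qed.

Lemma root_comp n (E : edgeset n) (r x : vtx n) :
  increasing_forest E -> ~~ haspar E r -> same_comp E x r -> r <= x.
Proof.
move=> inc nr; rewrite same_compE srel_sym => cxr.
set d := (fun u v : vtx n => (u, v) \in E).
have step : forall y z : vtx n, (y, z) \in E -> connect d r y = connect d r z.
  move=> y z yz; apply/idP/idP => [ry|rz].
    by apply: connect_trans ry (connect1 _).
  have zr : z != r.
    by apply: contraNneq nr => <-; apply/existsP; exists y.
  have [w [rw wz]] := last_step rz zr.
  by case/incP: inc => _ H2; rewrite -(H2 _ _ _ wz yz).
have cl : closed (srel E) (connect d r).
  move=> y z /orP[] yz; rewrite !inE; [exact: step | exact/esym/step].
have := closed_connect cl cxr; rewrite !inE connect0 => /esym /connectP[p pp ->].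
exact: (path_mono inc pp).
Qed.

Lemma pf_local_1 n (E : edgeset n) : is_priority_forest E -> local E.
Proof.
case/andP => inc pc; apply/localP => p c w pcE pw wc; apply: contraT => nw.
move/forallP: pc => /(_ p) /forallP /(_ w) /forallP /(_ c) /forallP /(_ w).
have -> : same_comp E p c by apply: connect1; rewrite /= pcE.
have -> : same_comp E w w by exact: connect0.
have -> /= : ~~ same_comp E p w.
  by apply/negP => /(root_comp inc nw); rewrite leqNgt pw.
by rewrite pw /= ltnNge wc.
Qed.

Definition rt n (E : edgeset n) (x : vtx n) : nat :=
  \max_(r : vtx n | (r <= x) && ~~ haspar E r) r.

Lemma root0 n (E : edgeset n) : increasing_forest E -> ~~ haspar E ord0.
Proof.
case/incP => H1 _; apply/existsP => -[q /H1]; by rewrite ltn0.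
Qed.

Lemma rt_wit n (E : edgeset n) (x : vtx n) : increasing_forest E ->
  exists r : vtx n, [/\ ~~ haspar E r, r <= x & rt E x = r].
Proof.
move=> inc.
have [|r Ar Er] := @eq_bigmax_cond (vtx n) (fun r : vtx n => (r <= x) && ~~ haspar E r)
   (fun r : vtx n => nat_of_ord r).
  by apply/card_gt0P; exists ord0; rewrite unfold_in /= root0.
by case/andP: Ar => rx nr; exists r; split.
Qed.

Lemma rt_ge n (E : edgeset n) (r x : vtx n) : ~~ haspar E r -> r <= x -> r <= rt E x.
Proof.
move=> nr rx; apply: (leq_bigmax_cond (F := fun r : vtx n => nat_of_ord r) r).
by rewrite rx nr.
Qed.

Lemma rt_le n (E : edgeset n) (x : vtx n) : rt E x <= x.
Proof. by apply/bigmax_leqP => i /andP[]. Qed.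

Lemma rt_root n (E : edgeset n) (x : vtx n) : ~~ haspar E x -> rt E x = x.
Proof. by move=> nx; apply/eqP; rewrite eqn_leq rt_le rt_ge. Qed.

Lemma rt_mono n (E : edgeset n) (x y : vtx n) : increasing_forest E ->
  x <= y -> rt E x <= rt E y.
Proof.
move=> inc xy; have [r [nr rx ->]] := rt_wit x inc.
by apply: rt_ge nr (leq_trans rx xy).
Qed.

Lemma rt_edge n (E : edgeset n) (p c : vtx n) : increasing_forest E -> local E ->
  (p, c) \in E -> rt E p = rt E c.
Proof.
move=> inc loc pc; have /incP[H1 _] := inc; have pltc := H1 _ _ pc.
apply/eqP; rewrite eqn_leq rt_mono ?(ltnW pltc) //=.
have [r [nr rc er]] := rt_wit c inc; rewrite er.
apply: (rt_ge nr); rewrite leqNgt; apply/negP => pr.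
by move/negP: nr; apply; apply: (localP _ loc) pc pr rc.
Qed.

Lemma same_rt n (E : edgeset n) (x y : vtx n) : increasing_forest E -> local E ->
  same_comp E x y -> rt E x = rt E y.
Proof.
move=> inc loc cxy.
have cl : closed (srel E) [pred z : vtx n | rt E z == rt E x].
  move=> u v /orP[] uv; rewrite !inE.
    by rewrite (rt_edge inc loc uv).
  by rewrite (rt_edge inc loc uv).
have := closed_connect cl cxy; rewrite !inE eqxx => /esym /eqP.
by [].
Qed.

Lemma conn_rt n (E : edgeset n) (x r : vtx n) : increasing_forest E -> local E ->
  ~~ haspar E r -> rt E x = r -> same_comp E x r.
Proof.
move=> inc loc nr.
have [m] := ubnP x; elim: m x => // m IH x xm rtx.
have [hx|nx] := boolP (haspar E x); last first.
  have -> : x = r by apply/val_inj; rewrite /= -rtx rt_root.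
  exact: connect0.
case/existsP: hx => q qx.
have /incP[H1 _] := inc; have qltx := H1 _ _ qx.
have cq : same_comp E q r.
  apply: IH; first by apply: leq_trans qltx _.
  by rewrite (rt_edge inc loc qx).
apply: connect_trans cq; apply: connect1; by rewrite /srel qx orbT.
Qed.

Lemma rt_same n (E : edgeset n) (x y : vtx n) : increasing_forest E -> local E ->
  rt E x = rt E y -> same_comp E x y.
Proof.
move=> inc loc exy; have [r [nr _ er]] := rt_wit x inc.
have cx := conn_rt inc loc nr er.
have cy := conn_rt inc loc nr (etrans (esym exy) er).
by apply: connect_trans cx _; rewrite srel_sym.
Qed.

Lemma pf_local_2 n (E : edgeset n) : increasing_forest E -> local E -> priority_cond E.
Proof.
move=> inc loc.
apply/forallP => u; apply/forallP => v; apply/forallP => u'; apply/forallP => v'.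
apply/implyP => cu; apply/implyP => cv; apply/implyP => ncuv; apply/implyP => uv.
have eu := same_rt inc loc cu; have ev := same_rt inc loc cv.
have ne : rt E u != rt E v.
  by apply: contra ncuv => /eqP /(rt_same inc loc).
have lt : rt E u < rt E v by rewrite ltn_neqAle ne rt_mono // ltnW.
rewrite ltnNge; apply/negP => vu.
have [r [nr rv er]] := rt_wit v inc.
have : r <= rt E u' by apply: rt_ge nr (leq_trans _ vu); rewrite -er ev rt_le.
by rewrite -eu -er leqNgt lt.
Qed.

Lemma pf_localE n (E : edgeset n) :
  is_priority_forest E = increasing_forest E && local E.
Proof.
apply/idP/idP => [H|/andP[inc loc]].
  by rewrite (pf_local_1 H) andbT; case/andP: H.
by rewrite /is_priority_forest inc pf_local_2.
Qed.

Definition Adj n (P : edgeset n) : {set vtx n * vtx n} := [set e | adj P e].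

Lemma pf_inc n (P : PF n) : increasing_forest (val P).
Proof. by case/andP: (valP P). Qed.

Lemma pf_loc n (P : PF n) : local (val P).
Proof. by have := valP P; rewrite pf_localE => /andP[]. Qed.

Lemma haspar_sub n (E F : edgeset n) w : E \subset F -> haspar E w -> haspar F w.
Proof. by move=> /subsetP sEF /existsP[q qw]; apply/existsP; exists q; apply: sEF. Qed.

Lemma par_in n (P Z : edgeset n) (q w : vtx n) : P \subset Z -> increasing_forest Z ->
  haspar P w -> (q, w) \in Z -> (q, w) \in P.
Proof.
move=> /subsetP sPZ /incP[_ H2] /existsP[q' qw'] qw.
by rewrite (H2 _ _ _ qw (sPZ _ qw')).
Qed.

Lemma bool_char n (P Z : PF n) : val P \subset val Z ->
  boolean_forest P Z = (val Z :\: val P \subset Adj (val P)).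
Proof.
move=> sPZ.
have incZ := pf_inc Z; have locZ := pf_loc Z; have locP := pf_loc P.
have /incP[H1 H2] := incZ.
apply/forallP/subsetP => [Hb [u v] eZP|Hs [u v]].
- rewrite inE; apply/adjP => w /= h1 h2; apply: contraT => nw.
  move: (eZP); rewrite inE => /andP[eP eZ].
  have /existsP[q qw] := localP _ locZ u v w eZ h1 (ltnW h2).
  have qP : (q, w) \notin val P by apply: contra nw => qP; apply/existsP; exists q.
  have := Hb (q, w); rewrite inE qP qw /= /removable pf_localE => /andP[_ loc'].
  have eZ' : (u, v) \in val Z :\ (q, w).
    rewrite !inE eZ andbT; apply/negP => /eqP [_ vw].
    by move: h2; rewrite vw ltnn.
  have /existsP[q' qw'] := localP _ loc' u v w eZ' h1 (ltnW h2).
  move: qw'; rewrite !inE => /andP[ne qw'].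
  by move: ne; rewrite (H2 _ _ _ qw' qw) eqxx.
- apply/implyP => eZP; rewrite /removable pf_localE.
  rewrite (inc_sub (subsetDl _ _) incZ) /=.
  apply/localP => p c w; rewrite !inE => /andP[ne pcZ] pw wc.
  have /existsP[q qw] := localP _ locZ p c w pcZ pw wc.
  case: (eqVneq (q, w) (u, v)) => [[eq ew]|ne']; last first.
    by apply/existsP; exists q; rewrite !inE ne' qw.
  subst q w.
  have uvP : (u, v) \notin val P by move: eZP; rewrite inE => /andP[].
  have Hadj : forall w, haspar (val P) w -> v = w -> False.
    by move=> w hw vw; subst w; move/negP: uvP; apply; apply: par_in sPZ incZ hw qw.
  case: (eqVneq c v) => [cv|cv].
    subst c; by move: ne; rewrite (H2 _ _ _ pcZ qw) eqxx.
  have vc : v < c by rewrite ltn_neqAle wc andbT; apply/eqP => /val_inj /esym; apply/eqP.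
  have [pcP|pcP] := boolP ((p, c) \in val P).
    by case: (Hadj v) => //; apply: (localP _ locP) pcP pw wc.
  have : (p, c) \in Adj (val P) by apply: Hs; rewrite inE pcP pcZ.
  rewrite inE => /adjP /(_ v pw vc) hv.
  by case: (Hadj v hv).
Qed.

Lemma union_pf n (P Q : PF n) (S : edgeset n) : val P \subset val Q ->
  S \subset val Q :\: val P -> S \subset Adj (val P) ->
  is_priority_forest (val P :|: S).
Proof.
move=> sPQ sSQ sSA; rewrite pf_localE.
have sUQ : val P :|: S \subset val Q.
  by rewrite subUset sPQ /=; apply: subset_trans sSQ (subsetDl _ _).
rewrite (inc_sub sUQ (pf_inc Q)) /=.
apply/localP => p c w; rewrite inE => /orP[pcP|pcS] pw wc.
  by apply: haspar_sub (subsetUl _ _) _; apply: (localP _ (pf_loc P)) pcP pw wc.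
have := subsetP sSA _ pcS; rewrite inE => /adjP /= Ha.
case: (ltnP w c) => [wlc|cw].
  by apply: haspar_sub (subsetUl _ _) _; apply: Ha.
have -> : w = c by apply/val_inj/eqP; rewrite eqn_leq wc cw.
by apply/existsP; exists p; rewrite inE pcS orbT.
Qed.

Lemma exists_adj n (P Q : PF n) : val P \proper val Q ->
  exists e, e \in (val Q :\: val P) :&: Adj (val P).
Proof.
case/properP => sPQ [e0 e0Q e0P].
have exP : exists m, [exists e in val Q :\: val P, (e.2 : nat) == m].
  by exists (e0.2 : nat); apply/existsP; exists e0; rewrite !inE e0Q e0P eqxx.
case: (ex_minnP exP) => m /existsP[[u v] /andP[eQP /eqP /= vm]] Hmin.
exists (u, v); rewrite inE eQP inE /=.
apply/adjP => w /= h1 h2; apply: contraT => nw.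
have /andP[_ eQ] : ((u, v) \notin val P) && ((u, v) \in val Q) by move: eQP; rewrite inE.
have /existsP[q qw] := localP _ (pf_loc Q) u v w eQ h1 (ltnW h2).
have qP : (q, w) \notin val P by apply: contra nw => qP; apply/existsP; exists q.
have : m <= w by apply: Hmin; apply/existsP; exists (q, w); rewrite !inE qP qw /=.
by rewrite -vm leqNgt h2.
Qed.

Lemma Qt_pf n (Q : PF n) (t : nat) : is_priority_forest [set x in val Q | (x.2 : nat) <= t].
Proof.
rewrite pf_localE.
have sub : [set x in val Q | (x.2 : nat) <= t] \subset val Q.
  by apply/subsetP => x; rewrite inE => /andP[].
rewrite (inc_sub sub (pf_inc Q)) /=.
apply/localP => p c w; rewrite inE => /andP[pcQ ct] pw wc.
have /existsP[q qw] := localP _ (pf_loc Q) p c w pcQ pw wc.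
by apply/existsP; exists q; rewrite inE qw /= (leq_trans wc ct).
Qed.

Lemma card_bound n (Q : PF n) : #|val Q| <= #|{: Pi n}|.
Proof.
pose f (e : vtx n * vtx n) : Pi n :=
  Some (insubd Q [set x in val Q | (x.2 : nat) <= e.2]).
have /incP[_ H2] := pf_inc Q.
have inj : {in val Q &, injective f}.
  move=> [u1 v1] [u2 v2] e1 e2 [] /(congr1 val).
  rewrite !val_insubd !Qt_pf /= => eq.
  have h1 : (u1, v1) \in [set x in val Q | (x.2 : nat) <= v1] by rewrite inE e1 /=.
  have h2 : (u2, v2) \in [set x in val Q | (x.2 : nat) <= v2] by rewrite inE e2 /=.
  move: (h1) (h2); rewrite eq -{2}eq !inE /= e1 e2 /= => l12 l21.
  have ev : v1 = v2 by apply/val_inj/eqP; rewrite eqn_leq l12 l21.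
  by subst v2; rewrite (H2 _ _ _ e1 e2).
by rewrite -(card_in_imset inj) max_card.
Qed.

Local Open Scope ring_scope.

Lemma alt0 (T : finType) (A : {set T}) (a : T) : a \in A ->
  \sum_(S in powerset A) (-1) ^+ #|S| = 0 :> int.
Proof.
move=> aA.
pose g (S : {set T}) := if a \in S then S :\ a else a |: S.
have gK : involutive g.
  move=> S; rewrite /g; have [aS|aS] := boolP (a \in S).
    by rewrite setD11 setD1K.
  by rewrite setU11 setU1K.
have := reindex_inj (inv_inj gK) (P := fun S => S \in powerset A)
  (F := fun S => (-1) ^+ #|S| : int) (op := +%R) (x := 0).
move=> E.
have : \sum_(S in powerset A) (-1) ^+ #|S| = - \sum_(S in powerset A) (-1) ^+ #|S| :> int.
  rewrite {1}E /= -sumrN; apply: eq_big => S.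
    rewrite !powersetE /g; case: ifP => aS.
      by apply/idP/idP => h; [rewrite -(setD1K aS) subUset sub1set aA | apply: subset_trans (subD1set _ _) h].
    by rewrite subUset sub1set aA.
  move=> _; rewrite /g; case: ifP => aS.
    by rewrite [in RHS](cardsD1 a S) aS exprS mulN1r opprK.
  by rewrite cardsU1 aS exprS mulN1r.
move=> h; lia.
Qed.

Lemma UD n (P Z : edgeset n) : P \subset Z -> P :|: (Z :\: P) = Z.
Proof.
move=> /subsetP sPZ; apply/setP => e; rewrite !inE.
by case eP: (e \in P); rewrite /= ?andbT //; rewrite (sPZ _ eP).
Qed.

Lemma DU n (P S : edgeset n) : S \subset ~: P -> (P :|: S) :\: P = S.
Proof.
move=> /subsetP dis; apply/setP => e; rewrite !inE.
case eP: (e \in P) => /=; last by [].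
by apply/esym/negP => eS; have := dis e eS; rewrite inE eP.
Qed.

Local Open Scope ring_scope.

Definition Gv n (P : PF n) (z : Pi n) : int :=
  if z is Some Z then
    (if val Z :\: val P \subset Adj (val P) then (-1) ^+ #|val Z :\: val P| else 0)
  else 0.

Lemma main n (P : PF n) : forall k (Q : PF n), val P \subset val Q ->
  (#|val Q :\: val P| < k)%N ->
  mobius_rec (@Pi_le n) k (Some P) (Some Q) = Gv P (Some Q).
Proof.
elim=> [|k IH] Q sPQ hk //.
rewrite /=.
case: eqP => [[<-]|neq].
  by rewrite /Gv setDv sub0set cards0 expr0.
rewrite sPQ.
have nPQ : val P != val Q.
  by apply: contraNneq (introN eqP neq) => /val_inj ->.
have pPQ : val P \proper val Q by rewrite properEneq nPQ sPQ.
rewrite (eq_bigr (Gv P)); last first.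
  move=> [Z|] //= /andP[/andP[h1 h2] h3].
  apply: IH => //.
  have nZQ : val Z != val Q.
    by apply: contra h3 => /eqP /val_inj ->.
  have pZQ : val Z \proper val Q by rewrite properEneq nZQ h2.
  have h1v : val P \subset val Z := h1.
  have := proper_card pZQ; have := subset_leq_card h1v.
  move: hk; rewrite !cardsDS //; lia.
pose B (z : Pi n) : bool :=
  if z is Some Z then val Z :\: val P \subset Adj (val P) else false.
rewrite (bigID B) /= [X in (_ + X)%R]big1 ?addr0; last first.
  by move=> [Z|] //= /andP[_ nB]; rewrite /Gv (negbTE nB).
pose A := (val Q :\: val P) :&: Adj (val P).
pose D := [set S : {set vtx n * vtx n} | (S \subset A) && (S != val Q :\: val P)].
pose h (S : {set vtx n * vtx n}) : Pi n := Some (insubd P (val P :|: S)).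
have hval : forall S : {set vtx n * vtx n}, S \subset A -> val (insubd P (val P :|: S)) = val P :|: S.
  move=> S sSA; rewrite val_insubd (@union_pf _ P Q) //.
    by apply: subset_trans sSA (subsetIl _ _).
  by apply: subset_trans sSA (subsetIr _ _).
have hdis : forall S : {set vtx n * vtx n}, S \subset A -> S \subset ~: val P.
  move=> S sSA; apply/subsetP => e eS.
  by have := subsetP sSA _ eS; rewrite !inE => /andP[/andP[]].
have hinj : {in D &, injective h}.
  move=> S1 S2; rewrite !inE => /andP[s1 _] /andP[s2 _] [] /(congr1 val).
  rewrite !hval // => e.
  by rewrite -(DU (hdis _ s1)) e DU // hdis.
transitivity (- \sum_(z in h @: D) Gv P z).
  congr (- _); apply: eq_bigl => z; apply/idP/idP.
    case: z => [Z|] //= /andP[/andP[/andP[h1 h2] h3] hB].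
    apply/imsetP; exists (val Z :\: val P).
      rewrite inE subsetI hB setSD //=.
      apply: contra h3 => /eqP e; apply/eqP; congr Some; apply: val_inj.
      have E1 := UD h1; have E2 := UD sPQ; rewrite e in E1.
      exact: (etrans (esym E1) E2).
    rewrite /h; congr Some; apply: val_inj; rewrite val_insubd UD //.
    by rewrite (valP Z).
  case/imsetP => S; rewrite inE => /andP[sSA nSQ] ->.
  rewrite /h /= !hval // subsetUl DU ?hdis //=.
  rewrite (subset_trans sSA (subsetIr _ _)) andbT.
  rewrite subUset sPQ /= (subset_trans sSA) ?(subset_trans (subsetIl _ _) (subsetDl _ _)) //=.
  apply: contra nSQ => /eqP [] e.
  have := congr1 val e; rewrite hval // => e2.
  by rewrite -(DU (hdis _ sSA)) e2.
rewrite big_imset //.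
rewrite (eq_bigr (fun S : {set vtx n * vtx n} => (-1) ^+ #|S| : int)); last first.
  move=> S; rewrite inE => /andP[sSA _].
  rewrite /Gv /h hval // DU ?hdis //.
  by rewrite (subset_trans sSA (subsetIr _ _)).
have [a aA] := exists_adj pPQ.
have alt := alt0 aA.
rewrite /Gv.
case: ifP => sub.
  have eA : A = val Q :\: val P by apply/setIidPl.
  rewrite (bigD1 A) /= in alt; last by rewrite powersetE subxx.
  rewrite (eq_bigl (fun S => (S \in powerset A) && (S != A))); last first.
    by move=> S; rewrite inE powersetE eA.
  rewrite -eA.
  move: alt; set s := \sum_(_ | _) _ => alt.
  have -> : s = - (-1) ^+ #|A| by apply/eqP; rewrite -subr_eq0 opprK addrC alt.
  by rewrite opprK.
rewrite (eq_bigl (fun S => S \in powerset A)) ?alt ?oppr0 //.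
move=> S; rewrite inE powersetE; case sSA: (S \subset A) => //=.
apply/negP => /eqP eS; move/negP: sub; apply.
by rewrite -eS (subset_trans sSA (subsetIr _ _)).
Qed.

Theorem lemma5p11 (n : nat) (P P' : PF n) :
  val P \proper val P' ->
  mobius (@Pi_le n) (Some P) (Some P') =
    (if boolean_forest P P' then (-1) ^+ (rho P' - rho P)%N else 0).
Proof.
move=> pPQ; have sPQ := proper_sub pPQ.
rewrite /mobius main //; last first.
  have := card_bound P'; have := subset_leq_card (subsetDl (val P') (val P)).
  move=> h1 h2; exact: (leq_trans h1 h2).
by rewrite /Gv bool_char // /rho cardsDS.
Qed.
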